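(* Let $t\ge 2$, let $n_1,\dots,n_t$ be positive integers, and let $G=K_{n_1,\dots,n_t}$ be the complete $t$-partite graph with partite sets $V_1,\dots,V_t$, $|V_i|=n_i$. Let $N_t=\{1,\dots,t\}$ and $f(I)=\sum_{i\in I}n_i$ for $I\subseteq N_t$. Let $p$ be a positive integer with $f(N_t)>p$. Then $|I_D|\le t-2$ for every $\gamma_p(G)$-set $D$ with $f(I_D)<p$.
   Context: A set $S\subseteq V(G)$ is a $p$-dominating set of $G$ if every vertex $v\in V(G)\setminus S$ has at least $p$ neighbors in $S$. The $p$-domination number $\gamma_p(G)$ is the minimum cardinality of a $p$-dominating set of $G$, and a $\gamma_p(G)$-set is a $p$-dominating set of cardinality $\gamma_p(G)$. For $D\subseteq V(G)$ write $D_i=V_i\cap D$ for $i\in N_t$ and $I_D=\{i\in N_t: |D_i|=|V_i|\}$. *)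

(* Defs.v *)
From mathcomp Require Import all_boot.
Set Implicit Arguments. Unset Strict Implicit. Unset Printing Implicit Defensive.

Definition p_dominating (T : finType) (adj : rel T) (p : nat) (S : {set T}) : bool :=
  [forall v, (v \notin S) ==> (p <= #|[set u in S | adj v u]|)].

Definition gamma_p_set (T : finType) (adj : rel T) (p : nat) (D : {set T}) : Prop :=
  p_dominating adj p D /\
  forall S : {set T}, p_dominating adj p S -> #|D| <= #|S|.

(* Complete t-partite graph K_{n_1,...,n_t}: vertices are pairs (i, k) with
   i : 'I_t the part index and k : 'I_(n i); adjacent iff in different parts. *)
Definition kpart_vertex (t : nat) (n : 'I_t -> nat) : finType :=
  {i : 'I_t & 'I_(n i)}.

Definition kpart_adj (t : nat) (n : 'I_t -> nat) : rel (kpart_vertex n) :=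
  fun x y => tag x != tag y.

Definition part_of (t : nat) (n : 'I_t -> nat) (D : {set kpart_vertex n}) (i : 'I_t)
  : {set kpart_vertex n} := [set x in D | tag x == i].

Definition I_D (t : nat) (n : 'I_t -> nat) (D : {set kpart_vertex n}) : {set 'I_t} :=
  [set i | #|part_of D i| == n i].

Definition fsum (t : nat) (n : 'I_t -> nat) (I : {set 'I_t}) : nat :=
  \sum_(i in I) n i.

(* Main.v *)
Require Import Defs.
From mathcomp Require Import all_boot zify.

Lemma card_tag_le (t : nat) (n : 'I_t -> nat) (A : {set kpart_vertex n}) :
  #|A| = \sum_(i < t) #|[set u in A | tag u == i]|.
Proof.
rewrite -sum1_card (partition_big (fun u : kpart_vertex n => tag u) predT) //=.
apply: eq_bigr => i _; rewrite -sum1_card; apply: eq_bigl => u.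
by rewrite inE.
Qed.

Theorem lemma3 (t : nat) (n : 'I_t -> nat) (p : nat)
  (ht : 2 <= t) (hn : forall i, 0 < n i) (hp : 0 < p)
  (hf : p < fsum n [set: 'I_t])
  (D : {set kpart_vertex n}) :
  gamma_p_set (@kpart_adj t n) p D ->
  fsum n (I_D D) < p ->
  #|I_D D| <= t - 2.
Proof.
move=> [Hdom _] Hlt.
rewrite leqNgt; apply/negP => Hbig.
have [j Hj] : exists j, j \notin I_D D.
  apply/existsP; rewrite -negb_forall; apply/negP => /forallP Hall.
  have E : I_D D = [set: 'I_t] by apply/setP => i; rewrite in_setT Hall.
  by move: Hlt; rewrite E ltnNge ltnW.
have Hoth : forall i, i != j -> i \in I_D D.
  move=> i Hij; apply/negPn/negP => Hi.
  have : #|[set i; j]| <= #|~: I_D D|.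
    apply: subset_leq_card; apply/subsetP => x; rewrite in_set2 in_setC => /orP [] /eqP ->; [exact Hi | exact Hj].
  rewrite cards2 Hij /= => H2; have := cardsC (I_D D); rewrite card_ord => H3. move: Hbig H2 H3. set c := #|I_D D|. set d := #|~: I_D D|. lia.
have [k Hk] : exists k : 'I_(n j), Tagged (fun i => 'I_(n i)) k \notin D.
  apply/existsP; rewrite -negb_forall; apply/negP => /forallP Hall.
  move: Hj; rewrite inE; apply/negP; rewrite negbK.
  have -> : part_of D j = [set Tagged (fun i => 'I_(n i)) k | k : 'I_(n j)].
    apply/setP => x; rewrite inE; apply/andP/imsetP.
      case: x => i k /= [_ /eqP Hi]; subst i; by exists k.
    by move=> [k' _ ->]; split => //; apply: negbNE (Hall k').
  rewrite card_imset ?card_ord // => a b /eqP; rewrite eq_Tagged /= => /eqP.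
  done.
move/forallP: Hdom => /(_ (Tagged (fun i => 'I_(n i)) k)); rewrite Hk /= => Hp.
have : #|[set u in D | kpart_adj (Tagged (fun i => 'I_(n i)) k) u]| <= fsum n (I_D D).
  rewrite card_tag_le /fsum (bigID (fun i => i \in I_D D)) /=.
  rewrite [X in _ + X]big1 ?addn0; last first.
    move=> i Hi; apply/eqP; rewrite cards_eq0; apply/eqP/setP => u; rewrite !inE.
    have Hij : i = j by apply/eqP; apply/negPn/negP => /Hoth; rewrite (negbTE Hi).
    subst i; rewrite /kpart_adj /= eq_sym; by case: (tag u == j); rewrite ?andbF.
  apply: leq_sum => i Hi; rewrite inE in Hi; rewrite -(eqP Hi).
  apply: subset_leq_card; apply/subsetP => u; rewrite !inE => /andP [/andP [-> _] ->] //.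
move=> H; move: (leq_trans Hp H); rewrite leqNgt Hlt //.
Qed.
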